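(* For every $r\ge1$, $C_{1,r}=\dfrac{(-1)^r}{r+1}$; equivalently \[ \sum_{\substack{(n_1,\dots,n_r)\in\mathbb Z_{\ge0}^r\\ n_1+\dots+n_r=r\\ n_{j+1}+\dots+n_r\le r-j\ (1\le j<r)}}\ \prod_{j=1}^r\frac{B_{n_j}}{n_j!}=\frac{1}{r+1}. \]
   Context: Bernoulli numbers $B_n$ are defined by $\sum_{n\ge0}B_n x^n/n! = xe^x/(e^x-1)$ (so $B_1=+1/2$). For a finite set $S\subset\mathbb Z_{\ge0}^r$, $C(S)=(-1)^r\sum_{(n_1,\dots,n_r)\in S}\prod_{j}B_{n_j}/n_j!$. For $1\le i\le r$, $C_{i,r}=C(S)$ where $S$ is the set of $(n_1,\dots,n_r)\in\mathbb Z_{\ge0}^r$ with $n_1+\dots+n_r=r$, $n_1+\dots+n_j<j$ for $1\le j<i$, and $n_{j+1}+\dots+n_r\le r-j$ for $i\le j<r$. (So $C_{1,r}$ is given by the set displayed in the claim.) *)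

(* Defs.v *)
From mathcomp Require Import all_boot all_order all_algebra.
Set Implicit Arguments. Unset Strict Implicit. Unset Printing Implicit Defensive.
Import Order.TTheory GRing.Theory Num.Theory.
Local Open Scope ring_scope.

(* Bernoulli numbers with B_1 = +1/2, defined by x e^x / (e^x - 1) = sum B_n x^n/n!.
   Equivalently x e^x = (e^x - 1) * sum_n B_n x^n/n!; comparing the coefficients
   of x^(n+1)/(n+1)! gives  sum_{k=0}^{n} C(n+1,k) B_k = n+1,  i.e.
   B_n = ((n+1) - sum_{k<n} C(n+1,k) B_k) / (n+1). *)
Fixpoint bern_list (n : nat) : seq rat :=
  match n with
  | 0 => [:: 1]
  | m.+1 =>
      let l := bern_list m in
      rcons l (((m.+2)%:R - \sum_(k < m.+1) ('C(m.+2, k))%:R * nth 0 l k) / (m.+2)%:R)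
  end.

Definition bernoulli (n : nat) : rat := nth 0 (bern_list n) n.

(* C(S) for a finite set S of r-tuples of naturals, given as a boolean predicate on
   tuples n : 'I_r -> nat; all tuples in the sets considered have coordinates <= r,
   so we enumerate over {ffun 'I_r -> 'I_r.+1}. *)
Definition C_of (r : nat) (S : {ffun 'I_r -> 'I_r.+1} -> bool) : rat :=
  (-1) ^+ r * \sum_(n : {ffun 'I_r -> 'I_r.+1} | S n)
     \prod_(j < r) (bernoulli (n j) / ((n j)`!)%:R).

(* partial sums with 1-based indices: n_1 + ... + n_j and n_{j+1} + ... + n_r *)
Definition pre_sum r (n : {ffun 'I_r -> 'I_r.+1}) (j : nat) : nat :=
  \sum_(k < r | (k < j)%N) (n k : nat).
Definition suf_sum r (n : {ffun 'I_r -> 'I_r.+1}) (j : nat) : nat :=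
  \sum_(k < r | (j <= k)%N) (n k : nat).

Definition S_set (i r : nat) (n : {ffun 'I_r -> 'I_r.+1}) : bool :=
  [&& (pre_sum n r == r)%N,
      [forall j : 'I_r, ((1 <= j) && (j < i))%N ==> (pre_sum n j < j)%N] &
      [forall j : 'I_r, ((i <= j) && (1 <= j))%N ==> (suf_sum n j <= r - j)%N]].

Definition C_ir (i r : nat) : rat := C_of (@S_set i r).

(* Main.v *)
Require Import Defs.
From mathcomp Require Import all_boot all_order all_algebra.
From mathcomp Require Import ring zify.
Set Implicit Arguments. Unset Strict Implicit. Unset Printing Implicit Defensive.
Import Order.TTheory GRing.Theory Num.Theory.
Local Open Scope ring_scope.

Lemma size_bern_list n : size (bern_list n) = n.+1.
Proof. by elim: n => [|n IH] //=; rewrite size_rcons IH. Qed.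

Lemma nth_bern_list n k : (k <= n)%N -> nth 0 (bern_list n) k = bernoulli k.
Proof.
elim: n => [|n IH]; first by rewrite leqn0 => /eqP ->.
rewrite leq_eqVlt => /orP [/eqP -> //|Hk].
by rewrite /= nth_rcons size_bern_list Hk IH.
Qed.

Lemma bern_rec n : \sum_(k < n.+1) ('C(n.+1, k))%:R * bernoulli k = (n.+1)%:R.
Proof.
case: n => [|m]; first by rewrite big_ord1.
rewrite big_ord_recr /= binSn.
have -> : bernoulli m.+1 = ((m.+2)%:R - \sum_(k < m.+1) ('C(m.+2, k))%:R * bernoulli k) / (m.+2)%:R.
  rewrite /bernoulli /= nth_rcons size_bern_list ltnn eqxx.
  congr (_ / _); congr (_ - _); apply: eq_bigr => k _.
  by rewrite nth_bern_list // -ltnS.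
set S := \sum_(k < m.+1) _.
field; by rewrite -(natrD _ 2 m) pnatr_eq0.
Qed.

Definition a (n : nat) : rat := bernoulli n / (n`!)%:R.

Lemma a0 : a 0 = 1.
Proof. by rewrite /a /bernoulli /= divr1. Qed.

Lemma exp_rel n : \sum_(k < n.+1) a k / ((n.+1 - k)`!)%:R = 1 / (n`!)%:R.
Proof.
have Hf : forall m, (m`!)%:R != 0 :> rat by move=> m; rewrite pnatr_eq0 -lt0n fact_gt0.
have -> : \sum_(k < n.+1) a k / ((n.+1 - k)`!)%:R =
   (\sum_(k < n.+1) ('C(n.+1, k))%:R * bernoulli k) / (n.+1)`!%:R.
  rewrite mulr_suml; apply: eq_bigr => k _.
  have hk : (k <= n.+1)%N by apply: ltnW.
  rewrite -(bin_fact hk) !natrM /a.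
  field. by rewrite !Hf pnatr_eq0 -lt0n bin_gt0.
rewrite (bern_rec n) factS natrM. field. by rewrite Hf -(natrD _ 1 n) pnatr_eq0.
Qed.

Definition lowz (N : nat) (p : {poly rat}) := forall i, (i < N)%N -> p`_i = 0.

Section Lowz.
Variable N : nat.
Implicit Types p q : {poly rat}.

Lemma lowzD p q : lowz N p -> lowz N q -> lowz N (p + q).
Proof. by move=> Hp Hq i Hi; rewrite coefD Hp // Hq // addr0. Qed.
Lemma lowzN p : lowz N p -> lowz N (- p).
Proof. by move=> Hp i Hi; rewrite coefN Hp // oppr0. Qed.
Lemma lowzB p q : lowz N p -> lowz N q -> lowz N (p - q).
Proof. by move=> Hp Hq; apply: lowzD => //; apply: lowzN. Qed.
Lemma lowzMl q p : lowz N p -> lowz N (q * p).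
Proof.
move=> Hp i Hi; rewrite coefM big1 // => j _.
by rewrite Hp ?mulr0 // (leq_ltn_trans (leq_subr _ _) Hi).
Qed.
Lemma lowzMr q p : lowz N p -> lowz N (p * q).
Proof. by rewrite mulrC; apply: lowzMl. Qed.
Lemma lowzMn p n : lowz N p -> lowz N (p *+ n).
Proof. by move=> Hp i Hi; rewrite coefMn Hp // mul0rn. Qed.
Lemma lowz_deriv p : lowz N.+1 p -> lowz N p^`().
Proof. by move=> Hp i Hi; rewrite coef_deriv Hp // mul0rn. Qed.
Lemma lowzX p : lowz N p -> lowz N.+1 ('X * p).
Proof. by move=> Hp [|i] Hi; rewrite coefXM //= Hp. Qed.
Lemma lowzXK p : lowz N.+1 ('X * p) -> lowz N p.
Proof. by move=> Hp i Hi; have := Hp i.+1 Hi; rewrite coefXM. Qed.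
Lemma lowz_cancel (U p : {poly rat}) : U`_0 = 1 -> lowz N (U * p) -> lowz N p.
Proof.
move=> HU Hp i; elim/ltn_ind: i => i IH Hi.
have := Hp i Hi; rewrite coefMr big_ord_recr /= subnn HU mul1r big1 ?add0r // => j _.
by rewrite IH ?mulr0 // (ltn_trans _ Hi).
Qed.
End Lowz.

Lemma lowz_le M N p : (M <= N)%N -> lowz N p -> lowz M p.
Proof. by move=> HMN Hp i Hi; apply: Hp; apply: leq_trans HMN. Qed.

Definition bp N : {poly rat} := \poly_(i < N) a i.
Definition ep N : {poly rat} := \poly_(i < N) (if i == 0%N then 0 else 1 / (i`!)%:R).
Definition up N : {poly rat} := \poly_(i < N) (1 / (i.+1`!)%:R).

Lemma fact_neq0 m : (m`!)%:R != 0 :> rat.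
Proof. by rewrite pnatr_eq0 -lt0n fact_gt0. Qed.

Lemma ep_up N : ep N.+1 = 'X * up N.
Proof.
apply/polyP => i; rewrite coefXM !coef_poly.
by case: i => [|i] //=; rewrite ltnS.
Qed.

Lemma algC (b c db x : {poly rat}) n :
  x * (db * c *+ n) - (b * c * (1 + x - b)) *+ n =
  (c * (x * db - b - x * b + b * b)) *+ n.
Proof. ring. Qed.
Lemma cstep_gen (p : {poly rat}) K m :
  lowz K ('X * p^`() - p - 'X * p + p * p) ->
  lowz K ('X * (p ^+ m.+1)^`() - (p ^+ m.+1 * (1 + 'X - p)) *+ m.+1).
Proof.
move=> H.
rewrite deriv_exp (_ : m.+1.-1 = m) // [p ^+ m.+1]exprS algC.
by apply: lowzMn; apply: lowzMl.
Qed.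

Section Ric.
Variable N : nat.
Local Notation b := (bp N.+2).
Local Notation e := (ep N.+2).

Lemma F2 : lowz N.+1 (e^`() - (e + 1)).
Proof.
move=> i Hi; rewrite coefB coefD coef_deriv coef1 !coef_poly /= ltnS Hi ltnS (ltnW Hi).
case: i Hi => [|i] Hi /=.
  by rewrite -mulr_natr; field.
rewrite -mulr_natr factS natrM /=; field.
by rewrite fact_neq0 -(natrD _ 2 i) pnatr_eq0.
Qed.

Lemma F3 : lowz N.+2 (b * e - 'X * (e + 1)).
Proof.
move=> i Hi; rewrite coefB coefXM.
case: i Hi => [|m] Hi /=.
  by rewrite coefM big_ord1 !coef_poly /= mulr0 subr0.
have e0 : e`_0 = 0 by rewrite coef_poly.
rewrite coefM big_ord_recr /= subnn e0 mulr0 addr0.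
rewrite coefD coef1 !coef_poly (ltnW Hi).
have -> : (if m == 0%N then 0 else 1 / (m`!)%:R) + (m == 0%N)%:R = 1 / (m`!)%:R :> rat.
  by case: m {Hi} => [|m] //=; rewrite ?addr0 ?add0r // divr1.
rewrite -(exp_rel m); apply/eqP; rewrite subr_eq0; apply/eqP; apply: eq_bigr => j _.
rewrite !coef_poly (leq_ltn_trans (leq_subr _ _) Hi).
rewrite (ltn_trans (ltn_ord j) Hi).
have -> : (m.+1 - j == 0)%N = false by rewrite subn_eq0 leqNgt ltn_ord.
by rewrite mul1r.
Qed.



Lemma algG (b e db de x : {poly rat}) :
  db * e + b * (e + 1) - (e + 1) - x * (e + 1) =
  (db * e + b * de - (e + 1 + x * de)) - (b - x) * (de - (e + 1)).
Proof. ring. Qed.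

Lemma algR (b e db x : {poly rat}) :
  e * (x * db - b - x * b + b * b) =
  x * (db * e + b * (e + 1) - (e + 1) - x * (e + 1)) + (b - 1 - x) * (b * e - x * (e + 1)).
Proof. ring. Qed.
Lemma derH' (b e : {poly rat}) : (b * e - 'X * (e + 1))^`() = b^`() * e + b * e^`() - (e + 1 + 'X * e^`()).
Proof. by rewrite !derivE mul1r addr0. Qed.

Definition R := 'X * b^`() - b - 'X * b + b * b.

Lemma Ric : lowz N.+1 R.
Proof.
set H := b * e - 'X * (e + 1).
set D := e^`() - (e + 1).
have HH : lowz N.+2 H := F3.
have HD : lowz N.+1 D := F2.
have HG : lowz N.+1 (b^`() * e + b * (e + 1) - (e + 1) - 'X * (e + 1)).
  rewrite (algG _ _ _ e^`()); apply: lowzB.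
    rewrite -derH'; exact: (lowz_deriv HH).
  exact: (lowzMl _ HD).
have HeR : lowz N.+2 (e * R).
  rewrite /R algR.
  apply: lowzD; [exact: (lowzX HG) | exact: (lowzMl _ HH)].
move: HeR; rewrite ep_up -mulrA => /lowzXK; apply: lowz_cancel.
by rewrite /up coef_poly ltn0Sn (_ : 1`! = 1%N) // divr1.
Qed.

Lemma cstep_coef m : (m < N)%N -> (b ^+ m.+2)`_m.+1 = (b ^+ m.+1)`_m.
Proof.
move=> Hm.
have HL := cstep_gen m Ric.
have := HL m.+1 Hm.
move: (b) => p.
rewrite coefD coefN coefXM /= coef_deriv coefMn mulrBr mulrDr mulr1 coefD coefN coefD coefMX /= -exprSr.
move: (p ^+ m.+1)`_m.+1 (p ^+ m.+1)`_m (p ^+ m.+2)`_m.+1 => c1 c0 c2 H.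
have E : (c2 - c0) *+ m.+1 = 0 by rewrite -H; ring.
by move/eqP: E; rewrite mulrn_eq0 /= subr_eq0 => /eqP.
Qed.

Lemma cone m : (m < N.+1)%N -> (b ^+ m.+1)`_m = 1.
Proof.
elim: m => [|m IH] Hm.
  by rewrite expr1 coef_poly /= a0.
by rewrite cstep_coef // IH // ltnW.
Qed.
End Ric.

Lemma coef_Xder (p : {poly rat}) t : ('X * p^`())`_t = p`_t *+ t.
Proof. by rewrite coefXM; case: t => [|t] //=; rewrite ?mulr0n // coef_deriv. Qed.

Lemma keyB (b : {poly rat}) n :
  (b * (b ^+ n.+1 *+ n.+1 - 'X * (b ^+ n.+1)^`())) *+ n.+2 =
  (b ^+ n.+2 *+ n.+2 - 'X * (b ^+ n.+2)^`()) *+ n.+1.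
Proof.
rewrite !deriv_exp (_ : n.+1.-1 = n) // (_ : n.+2.-1 = n.+1) // !exprS.
move: (b ^+ n) (b^`()) => c db; ring.
Qed.

Lemma keyB_coef (b : {poly rat}) n s :
  (\sum_(x < s.+1) b`_x * ((n.+1%:R - (s - x)%:R) * (b ^+ n.+1)`_(s - x))) *+ n.+2
  = ((n.+2%:R - s%:R) * (b ^+ n.+2)`_s) *+ n.+1.
Proof.
have := congr1 (fun p : {poly rat} => p`_s) (keyB b n).
rewrite /= !coefMn coefM coefB coefMn coef_Xder mulrBl !mulr_natl => <-.
congr (_ *+ _); apply: eq_bigr => x _.
by rewrite coefB coefMn coef_Xder mulrBl !mulr_natl.
Qed.

Section Comb.
Variable M : nat.
Local Notation T := 'I_M.+1.

Definition tot k (g : {ffun 'I_k -> T}) : nat := \sum_(i < k) (g i : nat).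
Definition suf k (g : {ffun 'I_k -> T}) (j : nat) : nat := \sum_(i < k | (j <= i)%N) (g i : nat).
Definition good k (g : {ffun 'I_k -> T}) : bool := [forall j : 'I_k, (suf g j <= k - j)%N].
Definition W k t : rat :=
  \sum_(g : {ffun 'I_k -> T} | good g && (tot g == t)) \prod_(i < k) a (g i).

Definition fcons k (x : T) (g : {ffun 'I_k -> T}) : {ffun 'I_k.+1 -> T} :=
  [ffun i => if unlift ord0 i is Some j then g j else x].
Definition ftail k (f : {ffun 'I_k.+1 -> T}) : {ffun 'I_k -> T} := [ffun j => f (lift ord0 j)].

Lemma fcons0 k x (g : {ffun 'I_k -> T}) : fcons x g ord0 = x.
Proof. by rewrite ffunE unlift_none. Qed.
Lemma fconsS k x (g : {ffun 'I_k -> T}) j : fcons x g (lift ord0 j) = g j.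
Proof. by rewrite ffunE liftK. Qed.
Lemma fcons_ht k (f : {ffun 'I_k.+1 -> T}) : fcons (f ord0) (ftail f) = f.
Proof.
apply/ffunP => i; case: (unliftP ord0 i) => [j ->|->].
  by rewrite fconsS ffunE.
by rewrite fcons0.
Qed.

Lemma suf0 k (g : {ffun 'I_k -> T}) : suf g 0 = tot g.
Proof. by apply: eq_bigl. Qed.

Lemma tot_fcons k x (g : {ffun 'I_k -> T}) : tot (fcons x g) = (x + tot g)%N.
Proof. by rewrite /tot big_ord_recl fcons0; congr addn; apply: eq_bigr => i _; rewrite fconsS. Qed.

Lemma suf_fconsS k x (g : {ffun 'I_k -> T}) j : suf (fcons x g) j.+1 = suf g j.
Proof.
rewrite /suf big_mkcond big_ord_recl /= add0n [RHS]big_mkcond.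
by apply: eq_bigr => i _; rewrite /bump leq0n add1n ltnS fconsS.
Qed.

Lemma good_fcons k x (g : {ffun 'I_k -> T}) :
  good (fcons x g) = (x + tot g <= k.+1)%N && good g.
Proof.
apply/forallP/andP => [H|[H1 /forallP H2] j].
  split; first by have := H ord0; rewrite suf0 tot_fcons.
  apply/forallP => j; have := H (lift ord0 j).
  by rewrite lift0 suf_fconsS subSS.
case: (unliftP ord0 j) => [j' ->|->].
  by rewrite lift0 suf_fconsS subSS.
by rewrite suf0 tot_fcons.
Qed.

Lemma good_tot k (g : {ffun 'I_k -> T}) : good g -> (tot g <= k)%N.
Proof.
case: k g => [|k] g; first by rewrite /tot big_ord0.
by move/forallP/(_ ord0); rewrite suf0.
Qed.

Lemma W0 t : W 0 t = (t == 0)%:R.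
Proof.
rewrite /W; case: t => [|t].
  rewrite (eq_bigl predT) => [|g]; last first.
    by rewrite /tot big_ord0 andbT; apply/forallP => [[]].
  rewrite (eq_bigr (fun _ => 1)) => [|g _]; last by rewrite big_ord0.
  by rewrite sumr_const card_ffun !card_ord expn0.
by rewrite big1 // => g; rewrite /tot big_ord0 andbF.
Qed.

Lemma nat_aux x T0 k t : (t <= k.+1)%N ->
  ((x + T0 <= k.+1)%N && (x + T0 == t)) = ((x <= t)%N && (T0 == t - x)%N).
Proof.
move=> Ht; apply/andP/andP => [[H1 /eqP H2]|[H1 /eqP H2]]; split; try apply/eqP; lia.
Qed.

Lemma W_rec k t : (t <= k.+1)%N -> (t <= M)%N ->
  W k.+1 t = \sum_(x < t.+1) a x * W k (t - x)%N.
Proof.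
move=> Htk HtM.
rewrite /W (reindex (fun p : T * {ffun 'I_k -> T} => fcons p.1 p.2)) /=; last first.
  exists (fun f : {ffun 'I_k.+1 -> T} => (f ord0, ftail f)) => [[x g] _ | f _] /=; last exact: fcons_ht.
  congr pair; first exact: fcons0.
  by apply/ffunP => j; rewrite ffunE fconsS.
rewrite (eq_bigl (fun p : T * {ffun 'I_k -> T} => (p.1 <= t)%N && (good p.2 && (tot p.2 == (t - p.1)%N)))); last first.
  move=> [x g] /=; rewrite good_fcons tot_fcons.
  case: (good g); rewrite ?andbT ?andbF //=; first exact: nat_aux.
rewrite (eq_bigr (fun p : T * {ffun 'I_k -> T} => a p.1 * \prod_(i < k) a (p.2 i))); last first.
  by move=> [x g] _ /=; rewrite big_ord_recl fcons0; congr (_ * _); apply: eq_bigr => i _; rewrite fconsS.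
rewrite -(pair_big_dep (fun x : T => (x <= t)%N) (fun x g => good g && (tot g == (t - x)%N))
   (fun (x : T) (g : {ffun 'I_k -> T}) => a x * \prod_(i < k) a (g i))) /=.
rewrite (eq_bigr (fun x : T => a x * W k (t - x)%N)); last by move=> x _; rewrite big_distrr.
rewrite -(big_mkord (fun x => (x <= t)%N) (fun x => a x * W k (t - x)%N)).
rewrite -(big_mkord xpredT (fun x => a x * W k (t - x)%N)).
rewrite [RHS](big_nat_widen _ _ M.+1) ?ltnS //.
Qed.

Lemma Wformula N : (M <= N)%N -> forall k s, (k <= M)%N -> (s <= k.+1)%N ->
  W k s = (k.+1%:R - s%:R) / k.+1%:R * ((bp N.+2) ^+ k.+1)`_s.
Proof.
move=> HMN; elim=> [|k IH] s Hk Hs.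
  rewrite W0 expr1 coef_poly.
  case: s Hs => [|[|s]] Hs //=.
  by rewrite subrr !mul0r.
have [->|Hs'] := eqVneq s k.+2.
  rewrite subrr mul0r mul0r /W big1 // => g /andP [/good_tot H1 /eqP H2].
  by move: H1; rewrite H2 ltnn.
have Hs1 : (s <= k.+1)%N by rewrite -ltnS ltn_neqAle Hs' Hs.
rewrite W_rec //; last by apply: leq_trans Hs1 Hk.
set b := bp N.+2.
have Hk1 : (k.+1%:R : rat) != 0 by rewrite pnatr_eq0.
have Hk2 : (k.+2%:R : rat) != 0 by rewrite pnatr_eq0.
set S := \sum_(x < s.+1) b`_x * ((k.+1%:R - (s - x)%:R) * (b ^+ k.+1)`_(s - x)).
have -> : \sum_(x < s.+1) a x * W k (s - x)%N = S / k.+1%:R.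
  rewrite /S mulr_suml; apply: eq_bigr => x _.
  rewrite IH ?(ltnW Hk) //; last by apply: leq_trans (leq_subr _ _) Hs1.
  have -> : b`_x = a x.
    rewrite /b coef_poly ifT //.
    apply: leq_trans (ltn_ord x) _; rewrite ltnS; lia.
  by rewrite -/b; field; rewrite -(natrD _ 1 k) pnatr_eq0.
have key := keyB_coef b k s.
rewrite [RHS]mulrAC; apply/eqP; rewrite eqr_div //.
by apply/eqP; rewrite !mulr_natr; exact: key.
Qed.
End Comb.

Lemma S_set_good r (n : {ffun 'I_r -> 'I_r.+1}) :
  @S_set 1 r n = good n && (tot n == r).
Proof.
have Hpre : pre_sum n r = tot n by apply: eq_bigl => i; rewrite ltn_ord.
rewrite /S_set Hpre.
have -> : [forall j : 'I_r, ((1 <= j) && (j < 1))%N ==> (pre_sum n j < j)%N].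
  by apply/forallP => j; apply/implyP => /andP [H1 H2]; lia.
apply/and3P/andP => [[/eqP Ht _ /forallP H]|[/forallP H /eqP Ht]].
  split; last by rewrite Ht.
  apply/forallP => j; case: (posnP j) => Hj.
    by rewrite Hj suf0 Ht subn0.
  by have := H j; rewrite Hj.
split => //; first by rewrite Ht.
by apply/forallP => j; apply/implyP => _; exact: (H j).
Qed.

Theorem lemma3p1 (r : nat) : (1 <= r)%N ->
  C_ir 1 r = (-1) ^+ r / (r.+1)%:R.
Proof.
move=> Hr.
rewrite /C_ir /C_of (eq_bigl _ _ (@S_set_good r)).
have -> : \sum_(n : {ffun 'I_r -> 'I_r.+1} | good n && (tot n == r)) \prod_(j < r) (bernoulli (n j) / ((n j)`!)%:R)
   = W r r r by [].
rewrite (Wformula (leqnn r)) // cone // (_ : r.+1%:R - r%:R = 1 :> rat).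
  by rewrite mul1r mulr1.
by rewrite mulrSr addrAC subrr add0r.
Qed.
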